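(* Let $C\subset\mathbb{R}^n$ be a pointed, $n$-dimensional closed convex cone and $\Omega=S^{n-1}\cap\operatorname{int}C^{\circ}$. Let $\mu$ be a nonzero, finite Borel measure on $\Omega$, and let $(\omega_i)_{i\in\mathbb{N}}$ be compact subsets of $\Omega$ with $\omega_i\subset\operatorname{int}\omega_{i+1}$ and $\bigcup_i\omega_i=\Omega$. Let $\mu_i(\sigma)=\mu(\sigma\cap\omega_i)$ and, for $f\in C^+(\omega_i)$, $L_{\mu_i}(f)=\gamma^n([f])\exp\int_{\omega_i}\log f\,d\mu_i$, where $[f]$ is the Wulff shape associated with $(C,\omega_i,f)$. Then there exists a constant $a>0$ such that $\sup\{L_{\mu_i}(f):f\in C^+(\omega_i)\}>a$ for every $i\in\mathbb{N}$.
   Context: $C^{\circ}=\{x:\langle x,y\rangle\le 0\ \forall y\in C\}$. $C^+(\omega)$ denotes the set of continuous functions $\omega\to(0,\infty)$. For a positive continuous $h$ on a compact $\omega\subset\Omega$, the Wulff shape is $[h]=C\cap\bigcap_{u\in\omega}\{y:\langle y,u\rangle\le -h(u)\}$. $\gamma^n$ is the standard Gaussian probability measure on $\mathbb{R}^n$. *)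

(* Defs.v *)
From HB Require Import structures.
From mathcomp Require Import all_boot all_order all_algebra.
From mathcomp Require Import all_classical all_reals all_analysis.
Set Implicit Arguments. Unset Strict Implicit. Unset Printing Implicit Defensive.
Import Order.TTheory GRing.Theory Num.Theory numFieldNormedType.Exports.
Local Open Scope classical_set_scope.
Local Open Scope ring_scope.

Section Defs.
Variable R : realType.

Definition dotv (n : nat) (x y : 'rV[R]_n) : R := \sum_(i < n) x ord0 i * y ord0 i.

Definition sphere (n : nat) : set 'rV[R]_n := [set x | dotv x x = 1].

Definition is_cone (n : nat) (C : set 'rV[R]_n) :=
  C 0 /\ forall (l : R) x, 0 <= l -> C x -> C (l *: x).
Definition is_convex_set (n : nat) (C : set 'rV[R]_n) :=
  forall (t : R) x y, 0 <= t <= 1 -> C x -> C y -> C (t *: x + (1 - t) *: y).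
Definition pointed (n : nat) (C : set 'rV[R]_n) :=
  forall x, C x -> C (- x) -> x = 0.
Definition full_dim (n : nat) (C : set 'rV[R]_n) := interior C !=set0.

Definition polar (n : nat) (C : set 'rV[R]_n) : set 'rV[R]_n :=
  [set x | forall y, C y -> dotv x y <= 0].

Definition Omega (n : nat) (C : set 'rV[R]_n) : set 'rV[R]_n :=
  @sphere n `&` interior (polar C).

(* interior of w relative to the ambient set X (here X = Omega) *)
Definition rel_interior (n : nat) (X w : set 'rV[R]_n) : set 'rV[R]_n :=
  [set x | w x /\ exists2 e : R, 0 < e & ball x e `&` X `<=` w].

Definition wulff (n : nat) (C w : set 'rV[R]_n) (h : 'rV[R]_n -> R) : set 'rV[R]_n :=
  C `&` [set y | forall u, w u -> dotv y u <= - h u].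

Definition Borel (n : nat) := g_sigma_algebraType (@open 'rV[R]_n).

Definition gdens (t : R) : R := (Num.sqrt (pi *+ 2))^-1 * expR (- (t ^+ 2) / 2).

(* iterated Gaussian integral over R^n of a nonnegative function
   (by Tonelli this is the integral w.r.t. the product measure gamma^n) *)
Fixpoint gauss_int (n : nat) : ('rV[R]_n -> \bar R) -> \bar R :=
  match n return ('rV[R]_n -> \bar R) -> \bar R with
  | 0 => fun f => f 0
  | n'.+1 => fun f =>
      (\int[@lebesgue_measure R]_(t in [set: R])
         ((gdens t)%:E * gauss_int (fun y : 'rV[R]_n' => f (row_mx (\row_(j < 1) t) y))))%E
  end.

Definition gaussian (n : nat) (A : set 'rV[R]_n) : \bar R :=
  gauss_int (fun x => (\1_A x)%:E).

Definition L_mu (n : nat) (C w : set 'rV[R]_n)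
    (mu : {measure set (Borel n) -> \bar R}) (f : 'rV[R]_n -> R) : R :=
  fine (gaussian (wulff C w f)) *
  expR (fine (\int[fun A : set (Borel n) => mu (A `&` w)]_(x in (w : set (Borel n))) (ln (f x))%:E)%E).

End Defs.

Arguments L_mu {R n} C w mu f.
Arguments rel_interior {R n} X w.
Arguments wulff {R n} C w h.

(* Main.v *)
Require Import Defs.
From HB Require Import structures.
From mathcomp Require Import all_boot all_order all_algebra.
From mathcomp Require Import all_classical all_reals all_analysis.
Import Order.TTheory GRing.Theory Num.Theory numFieldNormedType.Exports.
From mathcomp Require Import ring lra measurable_realfun.
Local Open Scope classical_set_scope.
Local Open Scope ring_scope.

Section Aux.
Variable R : realType.

Lemma ballRE (x y e : R) : ball x e y <-> `|x - y| < e.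
Proof. by rewrite -ball_normE. Qed.

Lemma ballmxE n (x y : 'rV[R]_n) e : 0 < e ->
  ball x e y <-> forall j, `|x ord0 j - y ord0 j| < e.
Proof.
move=> e0; split.
  by case=> _ H j; apply/ballRE; apply: H.
move=> H; split => // i j; rewrite (ord1 i); apply/ballRE; exact: H.
Qed.

Lemma ge0_le_integral_gen d (T : measurableType d) (mu : {measure set T -> \bar R})
  (f g : T -> \bar R) : (forall x, (0 <= f x)%E) -> (forall x, (f x <= g x)%E) ->
  (\int[mu]_x f x <= \int[mu]_x g x)%E.
Proof.
move=> f0 fg.
have g0 x : (0 <= g x)%E by apply: le_trans (f0 x) (fg x).
rewrite !ge0_integralTE//; apply: ereal_sup_le => _ [h hf <-].
by exists h => // x; exact: le_trans (hf x) (fg x).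
Qed.

Lemma gdens_ge0 (t : R) : 0 <= gdens t.
Proof. by rewrite /gdens mulr_ge0 ?invr_ge0 ?sqrtr_ge0 ?expR_ge0. Qed.

Lemma gdensE (t : R) : gdens t = normal_pdf 0 1 t.
Proof.
rewrite /normal_pdf oner_eq0 /= /normal_peak /normal_fun expr1n mul1r subr0.
by rewrite /gdens.
Qed.

Lemma int_gdens : (\int[@lebesgue_measure R]_(t in [set: R]) (gdens t)%:E = 1)%E.
Proof.
under eq_integral do rewrite gdensE.
exact: integral_normal_pdf.
Qed.

Lemma gauss_int_ge0 n (f : 'rV[R]_n -> \bar R) : (forall x, 0 <= f x)%E -> (0 <= gauss_int f)%E.
Proof.
elim: n f => [|n IH] f f0 /=; first exact: f0.
apply: integral_ge0 => t _; apply: mule_ge0; first by rewrite lee_fin gdens_ge0.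
by apply: IH => y.
Qed.

Lemma gauss_int_le n (f g : 'rV[R]_n -> \bar R) : (forall x, 0 <= f x)%E ->
  (forall x, f x <= g x)%E -> (gauss_int f <= gauss_int g)%E.
Proof.
elim: n f g => [|n IH] f g f0 fg /=; first exact: fg.
apply: ge0_le_integral_gen => t.
  apply: mule_ge0; first by rewrite lee_fin gdens_ge0.
  by apply: gauss_int_ge0 => y.
by apply: lee_wpmul2l; [rewrite lee_fin gdens_ge0| apply: IH].
Qed.

Lemma gauss_int_le1 n (f : 'rV[R]_n -> \bar R) : (forall x, 0 <= f x <= 1)%E ->
  (gauss_int f <= 1)%E.
Proof.
elim: n f => [|n IH] f f01 /=; first by case/andP: (f01 0).
rewrite -int_gdens; apply: ge0_le_integral_gen => t.
  apply: mule_ge0; first by rewrite lee_fin gdens_ge0.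
  by apply: gauss_int_ge0 => y; case/andP: (f01 (row_mx (\row_(j < 1) t) y)).
rewrite -[X in (_ <= X)%E]mule1; apply: lee_wpmul2l; first by rewrite lee_fin gdens_ge0.
exact: IH.
Qed.


Lemma gdens_gt0 (t : R) : 0 < gdens t.
Proof.
rewrite /gdens mulr_gt0 ?expR_gt0// invr_gt0 sqrtr_gt0.
by rewrite pmulrn_rgt0 ?pi_gt0.
Qed.

Lemma gdens_mono (t M : R) : `|t| <= M -> gdens M <= gdens t.
Proof.
move=> tM; rewrite /gdens ler_wpM2l ?invr_ge0 ?sqrtr_ge0// ler_expR.
rewrite ler_pM2r ?invr_gt0// lerN2.
have t0 : 0 <= `|t| by [].
rewrite -(real_normK (num_real t)) ler_sqr//; exact: le_trans tM.
Qed.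

Lemma row_mx_ball n (z : 'rV[R]_(1 + n)) (t : R) (y : 'rV[R]_n) (d : R) : 0 < d ->
  `|z ord0 ord0 - t| < d -> ball (rsubmx z) d y ->
  ball z d (row_mx (\row_(j < 1) t) y).
Proof.
move=> d0 Bt /(ballmxE _ _ _ _ d0) yb; apply/(ballmxE _ _ _ _ d0) => j.
rewrite -(splitK j); case: (@fintype.split 1 n j) => k /=.
  rewrite row_mxEl mxE (ord1 k).
  have -> : lshift n (ord0 : 'I_1) = ord0 :> 'I_(1 + n) by apply: val_inj.
  exact: Bt.
by rewrite row_mxEr; have := yb k; rewrite mxE.
Qed.

Lemma gauss_int_lb n (z : 'rV[R]_n) (d : R) : 0 < d ->
  exists2 c : R, 0 < c & forall f : 'rV[R]_n -> \bar R, (forall x, (0 <= f x)%E) ->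
    (forall x, ball z d x -> (1 <= f x)%E) -> (c%:E <= gauss_int f)%E.
Proof.
move=> d0; elim: n z => [|n IH] z.
  exists 1 => // f f0 f1 /=; apply: f1; rewrite (thinmx0 z); exact: ballxx.
set z0 := z ord0 ord0.
have [c c0 Hc] := IH (rsubmx (z : 'rV_(1 + n))).
set M := `|z0| + d.
exists (gdens M * c * (d *+ 2)); first by apply: mulr_gt0; [exact: mulr_gt0 (gdens_gt0 _) c0|rewrite pmulrn_rgt0].
move=> f f0 f1 /=.
pose B : set R := ball z0 d.
have mB : measurable B by rewrite /B ball_itv; exact: measurable_itv.
apply: (@le_trans _ _ (\int[@lebesgue_measure R]_(t in [set: R]) ((gdens M * c) * \1_((fun _ : R => B) (gdens M * c)) t)%:E))%E.
  rewrite (@integralZl_indic _ _ _ (@lebesgue_measure R) setT measurableT (fun _ => B))//.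
  rewrite integral_indic// setIT EFinM.
  rewrite -(lebesgue_measure_ball z0 (ltW d0)).
  exact: le_refl.
  by move=> h; exfalso; move: h; apply/negP; rewrite -leNgt mulr_ge0 ?gdens_ge0 ?ltW.
apply: ge0_le_integral_gen => t.
  rewrite lee_fin; apply: mulr_ge0; first exact: mulr_ge0 (gdens_ge0 _) (ltW c0).
  by rewrite indicE ler0n.
have [Bt|nBt] := boolP (t \in B); last first.
  rewrite indicE (negbTE nBt) mulr0; apply: mule_ge0; first by rewrite lee_fin gdens_ge0.
  by apply: gauss_int_ge0.
rewrite indicE Bt mulr1 EFinM; apply: lee_pmul.
- by rewrite lee_fin gdens_ge0.
- by rewrite lee_fin ltW.
- rewrite lee_fin; apply: gdens_mono.
  move: Bt; rewrite inE /B => /ballRE; rewrite /M => h.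
  have -> : t = z0 + (t - z0) by rewrite addrC subrK.
  apply: le_trans (ler_normD _ _) _; rewrite distrC in h; lra.
- apply: Hc => [y|y yb]; first exact: f0.
  apply: f1.
  move: Bt; rewrite inE /B => /ballRE Bt.
  exact: (@row_mx_ball n z t y d d0 Bt yb).
Qed.

Lemma dotvC n (x y : 'rV[R]_n) : dotv x y = dotv y x.
Proof. by rewrite /dotv; apply: eq_bigr => j _; rewrite mulrC. Qed.

Lemma dotvDr n (u x y : 'rV[R]_n) : dotv u (x + y) = dotv u x + dotv u y.
Proof. by rewrite /dotv -big_split; apply: eq_bigr => j _; rewrite mxE mulrDr. Qed.

Lemma unit_coord_le1 n (u : 'rV[R]_n) j : dotv u u = 1 -> `|u ord0 j| <= 1.
Proof.
move=> uu.
have h : u ord0 j * u ord0 j <= 1.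
  rewrite -uu /dotv (bigD1 j)//= lerDl; apply: sumr_ge0 => k _.
  by rewrite -expr2 sqr_ge0.
by rewrite ler_norml; apply/andP; split; nra.
Qed.

Lemma ball_scale n (y0 x : 'rV[R]_n) r : 0 < r ->
  ball ((4 / r) *: y0) 4 x -> ball y0 r ((r / 4) *: x).
Proof.
move=> r0 /(ballmxE _ _ _ _ (ltr0Sn _ 3)) hx; apply/(ballmxE _ _ _ _ r0) => j.
have := hx j; rewrite !mxE => h.
have -> : y0 ord0 j - r / 4 * x ord0 j = r / 4 * (4 / r * y0 ord0 j - x ord0 j).
  by field; rewrite gt_eqF.
rewrite normrM ger0_norm ?divr_ge0 ?ltW//.
set a := `|_| in h *.
have : r / 4 * a < r / 4 * 4 by rewrite ltr_pM2l ?divr_gt0.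
by have -> : r / 4 * 4 = r by field.
Qed.

End Aux.

Arguments ballmxE {R n x y e}.
Arguments unit_coord_le1 {R n u} j.
Arguments gauss_int_lb {R n} z {d}.
Arguments ball_scale {R n y0 x r}.

Theorem lemma7p2 (R : realType) (n : nat) (C : set 'rV[R]_n)
  (C_closed : closed C) (C_convex : is_convex_set C) (C_cone : is_cone C)
  (C_pointed : pointed C) (C_full : full_dim C)
  (mu : {measure set (Borel R n) -> \bar R})
  (mu_fin : (mu setT < +oo)%E) (mu_nz : mu setT <> 0%E)
  (mu_on_Omega : mu (~` (Omega C : set (Borel R n))) = 0%E)
  (w : nat -> set 'rV[R]_n)
  (w_compact : forall i, compact (w i))
  (w_sub : forall i, w i `<=` Omega C)
  (w_incr : forall i, w i `<=` rel_interior (Omega C) (w i.+1))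
  (w_cover : \bigcup_i w i = Omega C) :
  exists2 a : R, 0 < a &
    forall i : nat, exists f : 'rV[R]_n -> R,
      [/\ {within w i, continuous f}, (forall u, w i u -> 0 < f u)
        & a < L_mu C (w i) mu f].
Proof.
case: C_full => y0 Iy0.
have /nbhs_ballP [r r0 Br] : nbhs y0 C := Iy0.
pose z := (4 / r) *: y0.
have BZ : ball z 4 `<=` C.
  move=> x hx.
  have -> : x = (4 / r) *: ((r / 4) *: x).
    by rewrite scalerA (_ : 4 / r * (r / 4) = 1) ?scale1r //; field; rewrite gt_eqF.
  apply: C_cone.2; first by rewrite divr_ge0 ?ltW.
  by apply: Br; apply: ball_scale.
have W : forall y u, ball z 2 y -> polar C u -> dotv u u = 1 -> dotv y u <= -1.
  move=> y u /(ballmxE (ltr0Sn _ 1)) yb pu uu.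
  have Cyu : C (y + u).
    apply: BZ; apply/(ballmxE (ltr0Sn _ 3)) => j.
    have := yb j; have := unit_coord_le1 j uu; rewrite !mxE.
    rewrite ltr_norml ler_norml => /andP[h1 h2] /andP[h3 h4].
    rewrite ltr_norml; apply/andP; split; lra.
  have := pu _ Cyu; rewrite dotvDr uu dotvC; lra.
have [c c0 Hc] := gauss_int_lb z (ltr0Sn R 1).
exists (c / 2); first by rewrite divr_gt0.
move=> i; exists (fun _ => 1); split.
- by apply: continuous_subspaceT => x; exact: cst_continuous.
- by move=> u _; exact: ltr01.
have cw : closed (w i) := compact_closed (@norm_hausdorff _ _) (w_compact i).
have mW : measurable (w i : set (Borel R n)).
  rewrite -[w i]setCK; apply: measurableC; apply: sub_sigma_algebra.
  exact: closed_openC.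
have I0 : (\int[fun A : set (Borel R n) => mu (A `&` w i)]_(x in (w i : set (Borel R n))) (ln 1)%:E = 0)%E.
  rewrite ln1; exact: (@integral0_eq _ _ _ (mrestr mu mW) (w i) (fun _ => 0%E)).
rewrite /L_mu /= I0 /= expR0 mulr1.
set G := gaussian _.
have G_lb : (c%:E <= G)%E.
  apply: Hc => [x|x xb]; first by rewrite lee_fin indicE ler0n.
  rewrite indicE mem_set //; split.
    apply: BZ; move/(ballmxE (ltr0Sn _ 1)): xb => xb.
    apply/(ballmxE (ltr0Sn _ 3)) => j; have := xb j; lra.
  move=> u wu; have [su iu] := w_sub _ _ wu.
  exact: W xb (interior_subset iu) su.
have G_ub : (G <= 1)%E.
  apply: gauss_int_le1 => x; rewrite indicE; case: (x \in _) => /=.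
    by rewrite lee_fin ler01 lexx.
  by rewrite lexx lee_fin ler01.
have Gf : G \is a fin_num.
  rewrite ge0_fin_numE ?(le_lt_trans G_ub) ?ltey //.
  by apply: le_trans G_lb; rewrite lee_fin ltW.
rewrite -(fineK Gf) lee_fin in G_lb; lra.
Qed.
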